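(* Let $\mathcal{P}\subseteq[0,1]^n$ be a polytope such that $\mathcal{P}\cap(0,1)^n\neq\emptyset$. If $\mathcal{P}$ is not of the form $\mathcal{P}=[0,1]^n\cap\mathcal{H}$ for some affine subspace $\mathcal{H}\subseteq\mathbb{R}^n$, then no Bernoulli factory for $\mathcal{P}$ exists.
   Context: A Bernoulli factory with output set $V$ (for inputs $x=(x_1,\dots,x_n)\in[0,1]^n$) is a (possibly infinite) rooted binary tree in which every internal node is labeled either by an index $i\in[n]$ or by a known constant $c\in(0,1)$, the two edges from an internal node to its children are labeled $0$ and $1$, and every leaf is labeled by an element of $V$. On input $x$, one starts at the root; at an internal node labeled $i$ one flips a fresh independent coin that equals $1$ with probability $x_i$ (an ''$x_i$-coin''), at a node labeled $c$ a fresh independent coin with bias $c$, and follows the edge labeled by the outcome; on reaching a leaf one outputs its label. $\mathcal{F}(x)$ denotes the random output ($\mathcal{F}(x)=\emptyset$ if no leaf is reached); $\mathcal{F}$ terminates almost surely on $S$ if $\Pr[\mathcal{F}(x)=\emptyset]=0$ for all $x\in S$. For a polytope $\mathcal{P}\subseteq[0,1]^n$ with vertex set $V$ (vertices viewed as vectors in $\mathbb{R}^n$), a Bernoulli factory for $\mathcal{P}$ is a Bernoulli factory $\mathcal{F}$ with output set $V$ that terminates almost surely on $\mathcal{P}\cap(0,1)^n$ and satisfies $\mathbb{E}[\mathcal{F}(x)]=x$ for all $x\in\mathcal{P}\cap(0,1)^n$. *)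

(* Defs.v *)
From HB Require Import structures.
From mathcomp Require Import all_boot all_order all_algebra.
From mathcomp Require Import all_classical all_reals topology normedtype sequences.
Set Implicit Arguments. Unset Strict Implicit. Unset Printing Implicit Defensive.
Import Order.TTheory GRing.Theory Num.Theory.
Import numFieldNormedType.Exports.
Local Open Scope classical_set_scope.
Local Open Scope ring_scope.

Definition vec (R : realType) (n : nat) := 'I_n -> R.

Definition conv_hull (R : realType) (n m : nat) (s : 'I_m -> vec R n) : set (vec R n) :=
  [set x | exists w : 'I_m -> R, (forall i, 0 <= w i) /\ \sum_(i < m) w i = 1 /\
       forall j, x j = \sum_(i < m) w i * s i j].

Definition is_polytope (R : realType) (n : nat) (P : set (vec R n)) : Prop :=
  exists (m : nat) (s : 'I_m -> vec R n), P = conv_hull s.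

Definition is_vertex (R : realType) (n : nat) (P : set (vec R n)) (v : vec R n) : Prop :=
  P v /\ forall (y z : vec R n) (t : R), P y -> P z -> 0 < t < 1 ->
    (forall j, v j = t * y j + (1 - t) * z j) -> y = v /\ z = v.

Definition in_cube (R : realType) (n : nat) (x : vec R n) : Prop :=
  forall j, 0 <= x j <= 1.

Definition in_open_cube (R : realType) (n : nat) (x : vec R n) : Prop :=
  forall j, 0 < x j < 1.

Definition is_linear_subspace (R : realType) (n : nat) (L : set (vec R n)) : Prop :=
  L (fun _ => 0) /\
  (forall u v, L u -> L v -> L (fun j => u j + v j)) /\
  (forall (a : R) u, L u -> L (fun j => a * u j)).

Definition is_affine_subspace (R : realType) (n : nat) (H : set (vec R n)) : Prop :=
  exists (x0 : vec R n) (L : set (vec R n)), is_linear_subspace L /\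
    H = [set y | exists u, L u /\ y = (fun j => x0 j + u j)].

(* Node labels: flip an x_i-coin, flip a known c-coin, or a leaf with an output. *)
Inductive node (R : realType) (n : nat) :=
  | Coin of 'I_n
  | Const of R
  | Leaf of vec R n.

(* A (possibly infinite) rooted binary tree is given by the labels of its
   nodes, addressed by the sequence of edge labels (bits) from the root.
   Only addresses all of whose strict prefixes are internal nodes are
   actual nodes of the tree; labels at other addresses are irrelevant. *)
Definition factory (R : realType) (n : nat) := seq bool -> node R n.

Definition is_internal (R : realType) (n : nat) (a : node R n) : bool :=
  if a is Leaf _ then false else true.

Definition is_node (R : realType) (n : nat) (F : factory R n) (p : seq bool) : bool :=
  all (fun i => is_internal (F (take i p))) (iota 0 (size p)).

Definition edge_prob (R : realType) (n : nat) (x : vec R n) (a : node R n) (b : bool) : R :=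
  match a with
  | Coin i => if b then x i else 1 - x i
  | Const c => if b then c else 1 - c
  | Leaf _ => 0
  end.

Definition path_prob (R : realType) (n : nat) (F : factory R n) (x : vec R n)
    (p : seq bool) : R :=
  \prod_(i < size p) edge_prob x (F (take i p)) (nth false p i).

Definition depth_sum (R : realType) (n : nat) (F : factory R n) (x : vec R n)
    (g : vec R n -> R) (k : nat) : R :=
  \sum_(t : k.-tuple bool)
     (if is_node F t then
        (if F t is Leaf v then path_prob F x t * g v else 0)
      else 0).

(* Bernoulli factory for P: internal constant labels lie in (0,1), leaf labels
   are vertices of P, and for every x in P ∩ (0,1)^n it terminates a.s.
   (total probability of reaching a leaf is 1) and E[F(x)] = x
   (coordinatewise: sum over leaves of Pr[leaf] * label_j = x_j). *)
Definition is_factory_for (R : realType) (n : nat) (P : set (vec R n))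
    (F : factory R n) : Prop :=
  (forall p, is_node F p ->
     match F p with
     | Coin _ => True
     | Const c => 0 < c < 1
     | Leaf v => is_vertex P v
     end) /\
  forall x : vec R n, P x -> in_open_cube x ->
    ((fun K : nat => \sum_(k < K) depth_sum F x (fun _ => 1) k) @ \oo --> (1 : R)) /\
    forall j : 'I_n,
      (fun K : nat => \sum_(k < K) depth_sum F x (fun v => v j) k) @ \oo --> x j.

(* Main.v *)
Require Import Defs.
From HB Require Import structures.
From mathcomp Require Import all_boot all_order all_algebra.
From mathcomp Require Import all_classical all_reals topology normedtype sequences.
From mathcomp Require Import ring lra.
Import Order.TTheory GRing.Theory Num.Theory.
Import numFieldNormedType.Exports.
Local Open Scope classical_set_scope.
Local Open Scope ring_scope.

Module Helpers.
Import ArrowAsProduct.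

Section Geom.
Variable R : realType.
Variable n : nat.

Lemma cont_prod (X : topologicalType) (f : X -> ('I_n -> R)) :
  (forall j, continuous (fun x => f x j)) -> continuous f.
Proof.
move=> H x; apply/cvg_sup => i.
exact: (@continuous_comp_initial ('I_n -> R) X R (fun g => g i) f (H i) x).
Qed.

Lemma haus : hausdorff_space ('I_n -> R).
Proof. apply: hausdorff_product => _. exact: norm_hausdorff. Qed.

Lemma cont_lin (m : nat) (c : 'I_m -> R) :
  continuous (fun w : 'I_m -> R => \sum_i w i * c i).
Proof.
apply: (@continuous_big R _ +%R 0 xpredT add_continuous) => i _ w.
apply: (@continuousM R _ (fun w : 'I_m -> R => w i) (fun _ => c i) w).
  exact: proj_continuous.
exact: cst_continuous.
Qed.

Lemma conv_hull_closed (m : nat) (s : 'I_m -> vec R n) :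
  closed (conv_hull s : set ('I_n -> R)).
Proof.
set D := [set w : 'I_m -> R | forall i, `[0,1]%classic (w i)] `&`
   ((fun w : 'I_m -> R => \sum_i w i * 1) @^-1` [set 1]).
set g := fun w : 'I_m -> R => (fun j : 'I_n => \sum_i w i * s i j).
have E1 : forall w : 'I_m -> R, \sum_i w i * 1 = \sum_i w i.
  by move=> w; apply: eq_bigr => i _; rewrite mulr1.
have -> : (conv_hull s : set ('I_n -> R)) = g @` D.
  apply/seteqP; split => x.
    move=> [w [w0 [w1 wx]]]; exists w.
      split.
        move=> i /=; rewrite in_itv /= w0 /=.
        rewrite -w1 (bigD1 i) //= lerDl sumr_ge0 //.
      by rewrite /= E1.
    by apply/funext => j; rewrite wx.
  move=> [w [w01 w1] <-]; exists w; split.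
    by move=> i; have := w01 i; rewrite /= in_itv /= => /andP[].
  split; last by [].
  by rewrite -w1 /= E1.
apply: compact_closed; first exact: haus.
apply: continuous_compact.
  have gc : continuous g by apply: cont_prod => j; exact: cont_lin.
  exact: continuous_subspaceT.
apply: compact_closedI.
  exact: (@tychonoff 'I_m (fun _ => R) (fun _ => `[0,1]%classic) (fun i => @segment_compact R 0 1)).
apply: preimage_closed.
  by move=> w _; exact: cont_lin.
have hR : hausdorff_space R by exact: norm_hausdorff.
exact: (@accessible_closed_set1 R (hausdorff_accessible hR) 1).
Qed.


Lemma eps_seq (m : nat) (q a : 'I_m -> R) (r : R) (l : seq 'I_m) :
  0 < r -> (forall i, 0 <= q i) -> (forall i, a i != 0 -> 0 < q i) ->
  exists e, 0 < e /\ e <= r /\ forall i, i \in l -> 0 <= q i + e * a i.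
Proof.
move=> r0 q0 qa; elim: l => [|i l [e [e0 [er He]]]].
  by exists r; split => //; split => // i.
have Hmono : forall e', 0 < e' -> e' <= e -> forall j, j \in l -> 0 <= q j + e' * a j.
  move=> e' e'0 e'e j jl; have := He j jl; have := q0 j.
  case: (ltrP (a j) 0) => aj.
    have : e * a j <= e' * a j by rewrite ler_wnM2r // ltW.
    lra.
  have : 0 <= e' * a j by rewrite mulr_ge0 // ltW.
  lra.
case: (ltrP (a i) 0) => ai.
  have qi : 0 < q i by apply: qa; rewrite lt_eqF.
  set e' := Num.min e (q i / (- a i)).
  have e'0 : 0 < e' by rewrite lt_min e0 /= divr_gt0 // oppr_gt0.
  have e'e : e' <= e by rewrite ge_min lexx.
  exists e'; split => //; split; first exact: le_trans e'e er.
  move=> j; rewrite in_cons => /orP[/eqP->|jl]; last exact: Hmono.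
  have : e' <= q i / (- a i) by rewrite ge_min lexx orbT.
  rewrite ler_pdivlMr ?oppr_gt0 // => h.
  have : e' * a i = - (e' * - a i) by rewrite mulrN opprK.
  lra.
exists e; split => //; split => //.
move=> j; rewrite in_cons => /orP[/eqP->|jl]; last exact: He.
have := q0 i; have : 0 <= e * a i by rewrite mulr_ge0 // ltW.
lra.
Qed.

Lemma eps_ex (m : nat) (q a : 'I_m -> R) (r : R) :
  0 < r -> (forall i, 0 <= q i) -> (forall i, a i != 0 -> 0 < q i) ->
  exists e, 0 < e /\ e <= r /\ forall i, 0 <= q i + e * a i.
Proof.
move=> r0 q0 qa; have [e [e0 [er He]]] := @eps_seq m q a r (enum 'I_m) r0 q0 qa.
by exists e; split => //; split => // i; apply: He; rewrite mem_enum.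
Qed.

Lemma conv_comb (m : nat) (s : 'I_m -> vec R n) (a b : vec R n) (t : R) :
  conv_hull s a -> conv_hull s b -> 0 <= t <= 1 ->
  conv_hull s (fun j => t * a j + (1 - t) * b j).
Proof.
move=> [wa [wa0 [wa1 ha]]] [wb [wb0 [wb1 hb]]] /andP[t0 t1].
exists (fun i => t * wa i + (1 - t) * wb i); split.
  by move=> i; rewrite addr_ge0 // mulr_ge0 // subr_ge0.
split.
  by rewrite big_split /= -!mulr_sumr wa1 wb1; ring.
move=> j; rewrite ha hb !mulr_sumr -big_split /=; apply: eq_bigr => i _.
by ring.
Qed.


Definition Rep (m : nat) (s : 'I_m -> vec R n) (Kp : 'I_m -> Prop) (x : vec R n) :=
  exists q : 'I_m -> R, (forall i, 0 <= q i) /\ (forall i, 0 < q i <-> Kp i) /\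
    \sum_i q i = 1 /\ forall j, x j = \sum_i q i * s i j.
Arguments Rep {m}.

Lemma rep_off {m : nat} {Kp : 'I_m -> Prop} {q : 'I_m -> R} {i} :
  (forall i, 0 <= q i) -> (forall i, 0 < q i <-> Kp i) -> ~ Kp i -> q i = 0.
Proof.
move=> q0 qK nK; have := q0 i; rewrite le_eqVlt => /orP[/eqP <-//|qi].
by exfalso; apply: nK; apply/qK.
Qed.

Lemma geom (m : nat) (s : 'I_m -> vec R n) (Kp : 'I_m -> Prop) (x0 : vec R n) :
  (forall x, conv_hull s x -> in_cube x) -> conv_hull s x0 -> in_open_cube x0 ->
  (forall x, conv_hull s x -> in_open_cube x -> Rep s Kp x) ->
  exists H, is_affine_subspace H /\ conv_hull s = [set x | in_cube x /\ H x].
Proof.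
move=> Pcube Px0 ox0 Hrep.
pose L := [set u : vec R n | exists a : 'I_m -> R, (forall i, ~ Kp i -> a i = 0) /\
   \sum_i a i = 0 /\ u = fun j => \sum_i a i * s i j].
exists [set y | exists u, L u /\ y = (fun j => x0 j + u j)]; split.
  exists x0, L; split => //; split; last split.
  - exists (fun _ => 0); split => //; split; first by rewrite big1.
    by apply/funext => j; rewrite big1 // => i _; rewrite mul0r.
  - move=> u v [a [aK [a0 ->]]] [b [bK [b0 ->]]].
    exists (fun i => a i + b i); split; first by move=> i nK; rewrite aK // bK // addr0.
    split; first by rewrite big_split /= a0 b0 addr0.
    by apply/funext => j; rewrite -big_split /=; apply: eq_bigr => i _; ring.
  - move=> c u [a [aK [a0 ->]]].
    exists (fun i => c * a i); split; first by move=> i nK; rewrite aK // mulr0.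
    split; first by rewrite -mulr_sumr a0 mulr0.
    by apply/funext => j; rewrite mulr_sumr; apply: eq_bigr => i _; ring.
have [q0 [q00 [q0K [q01 q0x]]]] := Hrep x0 Px0 ox0.
apply/seteqP; split => p.
  move=> Pp; split; first exact: Pcube.
  pose mid := fun j => 2^-1 * x0 j + (1 - 2^-1) * p j.
  have Pmid : conv_hull s mid.
    by apply: conv_comb => //; rewrite invr_ge0 invf_le1 ?ler1n // ler0n.
  have omid : in_open_cube mid.
    move=> j; have := ox0 j; have := Pcube p Pp j; rewrite /mid.
    have h2 : (2^-1 : R) = 1 / 2 by rewrite div1r.
    rewrite h2; lra.
  have [qm [qm0 [qmK [qm1 qmx]]]] := Hrep mid Pmid omid.
  exists (fun j => p j - x0 j); split; last by apply/funext => j; ring.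
  exists (fun i => 2 * (qm i - q0 i)); split.
    by move=> i nK; rewrite (rep_off qm0 qmK nK) (rep_off q00 q0K nK) subrr mulr0.
  split; first by rewrite -mulr_sumr sumrB qm1 q01 subrr mulr0.
  apply/funext => j.
  have E : \sum_i 2 * (qm i - q0 i) * s i j = 2 * (mid j - x0 j).
    rewrite qmx q0x -sumrB mulr_sumr; apply: eq_bigr => i _; ring.
  by rewrite E /mid; field.
move=> [py [u [[a [aK [a0 ue]]] pe]]].
pose d := fun j => \sum_i a i * s i j.
pose z := fun t : R => (fun j => x0 j + t * d j : R).
pose S := [set t : R | conv_hull s (z t)] `&` `[0, 1]%classic.
have S0 : S 0.
  split; last by rewrite /= in_itv /= lexx ler01.
  by change (conv_hull s (z 0)); have -> : z 0 = x0 by apply/funext => j; rewrite /z mul0r addr0.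
have ubS : has_ubound S by exists 1 => t [_]; rewrite /= in_itv /= => /andP[].
have supS : has_sup S by split => //; exists 0.
have Scl : closed S.
  apply: closedI; last exact: interval_closed.
  apply: preimage_closed; last exact: conv_hull_closed.
  have zc : continuous z.
    apply: cont_prod => j t'.
    rewrite /continuous_at /z; apply: cvgD; first exact: cvg_cst.
    by apply: cvgMl; exact: cvg_id.
  by move=> t _; exact: zc.
have ST : S (sup S).
  have := closure_sup (ex_intro _ 0 S0) ubS.
  by rewrite -(closure_id S).1.
set T := sup S in ST.
have [PT T01] := ST; move: T01; rewrite /= in_itv /= => /andP[T0 T1].
have zy : forall j, z T j = (1 - T) * x0 j + T * p j.
  by move=> j; rewrite /z pe ue /d; ring.
have [T1'|Tlt] := eqVneq T 1.
  have -> : p = z T by apply/funext => j; rewrite zy T1'; ring.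
  exact: PT.
have Tlt1 : T < 1 by rewrite lt_neqAle Tlt T1.
have ozT : in_open_cube (z T).
  move=> j; rewrite zy; have := ox0 j; have := py j => /andP[p0 p1] /andP[x0p x1].
  have h1 : 0 < (1 - T) * x0 j by rewrite mulr_gt0 // subr_gt0.
  have h2 : 0 <= T * p j by rewrite mulr_ge0.
  have h3 : (1 - T) * x0 j < (1 - T) * 1 by rewrite ltr_pM2l // subr_gt0.
  have h4 : T * p j <= T * 1 by rewrite ler_wpM2l.
  lra.
have [q [qge [qK [q1 qx]]]] := Hrep _ PT ozT.
have qa : forall i, a i != 0 -> 0 < q i.
  move=> i ai; apply/qK; apply: contrapT => nK; by move: ai; rewrite aK // eqxx.
have Tp : 0 < 1 - T by rewrite subr_gt0.
have [e [e0 [er He]]] := @eps_ex m q a (1 - T) Tp qge qa.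
have : S (T + e).
  split; last by rewrite /= in_itv /=; apply/andP; split; lra.
  exists (fun i => q i + e * a i); split => //; split.
    by rewrite big_split /= -mulr_sumr a0 q1 mulr0 addr0.
  move=> j; rewrite /z.
  have -> : x0 j + (T + e) * d j = z T j + e * d j by rewrite /z; ring.
  rewrite qx /d mulr_sumr -big_split /=; apply: eq_bigr => i _; ring.
move/(sup_upper_bound supS); rewrite -/T; lra.
Qed.

End Geom.

Section Fac.
Variable R : realType.
Variable n : nat.

Lemma psum_nd (f : nat -> R) : (forall k, 0 <= f k) ->
  {homo (fun K => \sum_(k < K) f k) : a b / (a <= b)%N >-> a <= b}.
Proof.
move=> f0 a b ab /=.
rewrite -!(big_mkord xpredT) (big_cat_nat (leq0n a) ab) /= lerDl.
exact: sumr_ge0.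
Qed.

Lemma sum_delta {m : nat} (f : 'I_m -> R) i :
  \sum_k (if k == i then f k else 0) = f i.
Proof. by rewrite -big_mkcond big_pred1_eq. Qed.

Lemma vertex_gen {m : nat} (s : 'I_m -> vec R n) i : conv_hull s (s i).
Proof.
exists (fun k => if k == i then 1 else 0); split; first by move=> k; case: eqP.
split; first by rewrite sum_delta.
move=> j; rewrite -(sum_delta (fun k => s k j) i); apply: eq_bigr => k _.
by case: eqP => _; rewrite ?mul1r ?mul0r.
Qed.

Lemma vertex_in (m : nat) (s : 'I_m -> vec R n) v :
  is_vertex (conv_hull s) v -> exists i, s i = v.
Proof.
move=> [[w [w0 [w1 wv]]] ext].
have [i wi] : exists i, 0 < w i.
  apply: contrapT => /forallNP h; move: w1; rewrite big1 => [/eqP|k _].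
    by rewrite eq_sym oner_eq0.
  by have := w0 k; rewrite le_eqVlt => /orP[/eqP<-//|/h].
have wi1 : w i <= 1.
  by rewrite -w1 (bigD1 i) //= lerDl sumr_ge0.
have [wi1'|wi1'] := eqVneq (w i) 1.
  have rest : \sum_(k | k != i) w k = 0.
    by move: w1; rewrite (bigD1 i) //= wi1'; lra.
  have wk0 : forall k, k != i -> w k = 0.
    move=> k ki; have := psumr_eq0P (fun k _ => w0 k) rest.
    by move=> /(_ k ki).
  exists i; apply/funext => j; rewrite wv (bigD1 i) //= wi1' mul1r big1 ?addr0 //.
  by move=> k ki; rewrite wk0 // mul0r.
have wlt : w i < 1 by rewrite lt_neqAle wi1' wi1.
have h1 : 0 < 1 - w i by rewrite subr_gt0.
pose z := fun j => \sum_k (if k == i then 0 else w k / (1 - w i)) * s k j.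
have Pz : conv_hull s z.
  exists (fun k => if k == i then 0 else w k / (1 - w i)); split.
    by move=> k; case: eqP => _ //; rewrite divr_ge0 // ltW.
  split => //.
  rewrite (bigD1 i) //= eqxx add0r.
  rewrite (eq_bigr (fun k => w k / (1 - w i))); last by move=> k /negbTE ->.
  rewrite -mulr_suml.
  have : \sum_(k | k != i) w k = 1 - w i.
    by move: w1; rewrite (bigD1 i) //= => <-; rewrite addrC addrK.
  by move=> ->; rewrite divff // gt_eqF.
have wi01 : 0 < w i < 1 by rewrite wi wlt.
have comb : forall j, v j = w i * s i j + (1 - w i) * z j.
  move=> j; rewrite wv /z (bigD1 i) //= (bigD1 i (P := xpredT)) //= eqxx mul0r add0r.
  congr (_ + _); rewrite mulr_sumr; apply: eq_bigr => k /negbTE ->.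
  by rewrite mulrA mulrCA divff ?mulr1 // gt_eqF.
have [<- _] := ext (s i) z (w i) (vertex_gen s i) Pz wi01 comb.
by exists i.
Qed.


Variable F : factory R n.

Lemma node_take {p} i : is_node F p -> is_node F (take i p).
Proof.
move=> /allP H; apply/allP => k; rewrite mem_iota size_take_min add0n => /andP[_ kl].
rewrite take_takel; last by apply: ltnW; apply: leq_trans kl (geq_minl _ _).
apply: H; rewrite mem_iota add0n /=.
exact: leq_trans kl (geq_minr _ _).
Qed.

Lemma node_internal {p} i : is_node F p -> (i < size p)%N -> is_internal (F (take i p)).
Proof. by move=> /allP H ip; apply: H; rewrite mem_iota add0n. Qed.

Hypothesis Hc : forall {p}, is_node F p ->
  match F p with Const c => 0 < c < 1 | _ => True end.

Lemma path_prob_gt0 (x : vec R n) p : in_open_cube x -> is_node F p ->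
  0 < path_prob F x p.
Proof.
move=> ox np; rewrite /path_prob; apply: prodr_gt0 => i _.
have ni := node_internal i np (ltn_ord i).
have := Hc (node_take i np) .
case: (F (take i p)) ni => [k|c|v] //= _.
  by have := ox k => /andP[x0 x1] _; case: nth; rewrite ?subr_gt0.
by move=> /andP[c0 c1]; case: nth; rewrite ?subr_gt0.
Qed.


Variable m : nat.
Variable s : 'I_m -> vec R n.
Variable iota : vec R n -> 'I_m.
Hypothesis HL : forall {p}, is_node F p -> forall {v}, F p = Leaf v -> s (iota v) = v.
Variable x : vec R n.
Hypothesis ox : in_open_cube x.

Definition cdef (i : 'I_m) (k : nat) : R :=
  \sum_(t : k.-tuple bool) (if is_node F t then
     (match F t with Leaf v => if iota v == i then path_prob F x t else 0 | _ => 0 end)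
     else 0).

Lemma cdef_ge0 i k : 0 <= cdef i k.
Proof.
apply: sumr_ge0 => t _; case: ifP => // nt; case: (F t) => // v.
by case: eqP => // _; apply: ltW; apply: path_prob_gt0.
Qed.

Lemma ds_decomp g k : depth_sum F x g k = \sum_i g (s i) * cdef i k.
Proof.
rewrite /depth_sum /cdef.
under [RHS]eq_bigr do rewrite mulr_sumr.
rewrite exchange_big /=; apply: eq_bigr => t _.
case: ifP => nt; last by rewrite big1 // => i _; rewrite mulr0.
case E: (F t) => [k'|c|v]; try by rewrite big1 // => i _; rewrite mulr0.
rewrite (bigD1 (iota v)) //= eqxx big1 ?addr0; last first.
  by move=> i /negbTE; rewrite eq_sym => ->; rewrite mulr0.
by rewrite (HL nt E) mulrC.
Qed.

Definition Cs (i : 'I_m) (K : nat) : R := \sum_(k < K) cdef i k.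

Lemma sum_ds g K : \sum_(k < K) depth_sum F x g k = \sum_i g (s i) * Cs i K.
Proof.
under eq_bigr do rewrite ds_decomp.
rewrite exchange_big /=; apply: eq_bigr => i _.
by rewrite /Cs mulr_sumr.
Qed.

Definition Kp (i : 'I_m) : Prop :=
  exists t, is_node F t /\ exists v, F t = Leaf v /\ iota v = i.

Lemma fac_rep :
  (fun K : nat => \sum_(k < K) depth_sum F x (fun _ => 1) k) @ \oo --> (1 : R) ->
  (forall j : 'I_n,
      (fun K : nat => \sum_(k < K) depth_sum F x (fun v => v j) k) @ \oo --> x j) ->
  @Rep R n m s Kp x.
Proof.
move=> h1 hj.
have Cnd i : {homo Cs i : a b / (a <= b)%N >-> a <= b}.
  by apply: psum_nd => k; exact: cdef_ge0.
have Dnd : {homo (fun K => \sum_(k < K) depth_sum F x (fun _ => 1) k) :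
    a b / (a <= b)%N >-> a <= b}.
  apply: psum_nd => k; rewrite ds_decomp; apply: sumr_ge0 => i _.
  by rewrite mul1r cdef_ge0.
have Dle1 K : \sum_(k < K) depth_sum F x (fun _ => 1) k <= 1.
  have := nondecreasing_cvgn_le Dnd (cvgP _ h1) K.
  by rewrite (cvg_lim _ h1).
have Cge0 i K : 0 <= Cs i K by apply: sumr_ge0 => k _; exact: cdef_ge0.
have Cle1 i K : Cs i K <= 1.
  apply: le_trans (Dle1 K); rewrite sum_ds (bigD1 i) //= mul1r lerDl.
  by apply: sumr_ge0 => k _; rewrite mul1r.
have Ccv i : cvgn (Cs i).
  apply: nondecreasing_is_cvgn; first exact: Cnd.
  by exists 1 => _ [K _ <-]; exact: Cle1.
pose q i := limn (Cs i).
have Cq i K : Cs i K <= q i by exact: nondecreasing_cvgn_le (Cnd i) (Ccv i) K.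
have Cq' i : Cs i @ \oo --> q i by exact: (Ccv i).
have q0 i : 0 <= q i by apply: le_trans (Cq i 0); rewrite /Cs big_ord0.
exists q; split => //; split; last split.
- move=> i; split.
    move=> qi; apply: contrapT => nK.
    have C0 : Cs i = fun _ => 0.
      apply/funext => K; rewrite /Cs big1 // => k _; rewrite /cdef big1 // => t _.
      case: ifP => // nt; case E: (F t) => [||v] //; case: eqP => // e.
      by exfalso; apply: nK; exists t; split => //; exists v.
    move: qi; rewrite /q C0 lim_cst ?ltxx //; exact: norm_hausdorff.
  move=> [t [nt [v [E e]]]].
  apply: lt_le_trans (Cq i (size t).+1).
  rewrite /Cs big_ord_recr /=; apply: ltr_pwDr; last first.
    by apply: sumr_ge0 => k _; exact: cdef_ge0.
  rewrite /cdef (bigD1 (in_tuple t)) //= nt E e eqxx; apply: ltr_pwDl.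
    exact: path_prob_gt0.
  apply: sumr_ge0 => u _; case: ifP => // nu; case: (F u) => // w.
  by case: eqP => // _; apply: ltW; apply: path_prob_gt0.
- have hs : (fun K => \sum_i Cs i K) @ \oo --> \sum_i q i.
    by apply: (cvg_big add_continuous) => // i _; exact: Cq'.
  have e1 : (fun K => \sum_(k < K) depth_sum F x (fun _ => 1) k) = fun K => \sum_i Cs i K.
    by apply/funext => K; rewrite sum_ds; apply: eq_bigr => i _; rewrite mul1r.
  rewrite e1 in h1.
  have hR : hausdorff_space R by exact: norm_hausdorff.
  exact: (cvg_unique hR hs h1).
- move=> j.
  have hs : (fun K => \sum_i Cs i K * s i j) @ \oo --> \sum_i q i * s i j.
    apply: (cvg_big add_continuous) => //.
    by move=> i _; apply: cvgMl; exact: Cq'.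
  have e1 : (fun K => \sum_(k < K) depth_sum F x (fun v => v j) k) =
      fun K => \sum_i Cs i K * s i j.
    by apply/funext => K; rewrite sum_ds; apply: eq_bigr => i _; rewrite mulrC.
  have := hj j; rewrite e1 => hj'.
  have hR : hausdorff_space R by exact: norm_hausdorff.
  exact: (cvg_unique hR hj' hs).
Qed.

End Fac.

End Helpers.
Import Helpers.

Theorem theorem4p1 (R : realType) (n : nat) (P : set (vec R n)) :
  is_polytope P ->
  (forall x, P x -> in_cube x) ->
  (exists x, P x /\ in_open_cube x) ->
  ~ (exists H : set (vec R n), is_affine_subspace H /\ P = [set x | in_cube x /\ H x]) ->
  ~ (exists F : factory R n, is_factory_for P F).
Proof.
move=> [m [s Ps]] Pcube [x0 [Px0 ox0]] Hnot [F [Fnode Fcv]].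
subst P.
have m0 : (0 < m)%N.
  case: m s Px0 {Fnode Fcv Hnot Pcube} => // s [w [_ [w1 _]]].
  by move: w1; rewrite big_ord0 => /eqP; rewrite eq_sym oner_eq0.
pose i0 : 'I_m := Ordinal m0.
pose iota := fun v : vec R n =>
  match pselect (exists i, s i = v) with left h => projT1 (cid h) | right _ => i0 end.
have HL : forall p, is_node F p -> forall v, F p = Leaf v -> s (iota v) = v.
  move=> p np v E; have := Fnode p np; rewrite E => /vertex_in ex.
  rewrite /iota; case: pselect => [h|//].
  exact: (projT2 (cid h)).
have Hc : forall p, is_node F p -> match F p with Const c => 0 < c < 1 | _ => True end.
  by move=> p np; have := Fnode p np; case: (F p).
apply: Hnot.
apply: (@geom R n m s (@Kp R n F m iota) x0) => //.
move=> x Px ox; have [h1 hj] := Fcv x Px ox.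
exact: (@fac_rep R n F Hc m s iota HL x ox h1 hj).
Qed.
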